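(* Let $G$ be an infinite, countably based, quasi-semisimple profinite group with $G/\mathrm{Z}(G)\cong\prod_{i\in\mathbb{N}}S_i$. Then $m_n(G)=\#\{i\in\mathbb{N}\mid R_n(S_i)>1\}$ is polynomially bounded as a function of $n$ if and only if $\widetilde{m}_n(G)=\#\{i\in\mathbb{N}\mid R_n(\widetilde{S}_i)>1\}$ is polynomially bounded as a function of $n$.
   Context: A profinite group $G$ is quasi-semisimple if $G=\overline{[G,G]}$ and $G/\mathrm{Z}(G)$ is a cartesian product of non-abelian finite simple groups $S_i$. $\widetilde{S}_i$ denotes the universal covering group (Schur cover) of $S_i$. For a finite group $H$, $R_n(H)$ is the number of isomorphism classes of irreducible complex representations of $H$ of dimension at most $n$. *)

(* Defs.v *)
From HB Require Import structures.
From mathcomp Require Import all_boot all_order all_algebra all_fingroup all_solvable all_field all_character.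
From mathcomp Require Import all_classical all_reals topology.
Set Implicit Arguments. Unset Strict Implicit. Unset Printing Implicit Defensive.
Import Order.TTheory GRing.Theory Num.Theory.

Local Open Scope classical_set_scope.

Definition group_law (T : Type) (mul : T -> T -> T) (inv : T -> T) (one : T) :=
  [/\ forall x y z, mul x (mul y z) = mul (mul x y) z,
      forall x, mul one x = x,
      forall x, mul x one = x,
      forall x, mul (inv x) x = one &
      forall x, mul x (inv x) = one].

Definition profinite_group (T : topologicalType) (mul : T -> T -> T)
    (inv : T -> T) (one : T) :=
  [/\ group_law mul inv one,
      continuous (fun p : T * T => mul p.1 p.2),
      continuous inv &
      [/\ compact [set: T],
      hausdorff_space T &
      totally_disconnected [set: T]]].

Definition countably_based (T : topologicalType) := @second_countable T.

Definition is_subgroup (T : Type) (mul : T -> T -> T) (inv : T -> T) (one : T)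
    (H : set T) :=
  [/\ H one, forall x y, H x -> H y -> H (mul x y) & forall x, H x -> H (inv x)].

Definition gen_subgroup (T : Type) (mul : T -> T -> T) (inv : T -> T) (one : T)
    (A : set T) : set T :=
  fun x => forall H, is_subgroup mul inv one H -> A `<=` H -> H x.

Definition derived_subgroup (T : Type) (mul : T -> T -> T) (inv : T -> T)
    (one : T) : set T :=
  gen_subgroup mul inv one
    [set c | exists x y, c = mul (mul (inv x) (inv y)) (mul x y)].

Definition center_set (T : Type) (mul : T -> T -> T) : set T :=
  [set z | forall g, mul z g = mul g z].

(* phi : G -> prod_i S_i is a continuous surjective group homomorphism with
   kernel Z(G), i.e. it induces an isomorphism of profinite groups
   G/Z(G) ~= prod_i S_i (continuous bijections between compact Hausdorff
   spaces are homeomorphisms).  The target carries the product topology of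
   the discrete groups S_i; continuity means each coordinate is locally
   constant. *)
Definition center_quotient_iso (T : topologicalType) (mul : T -> T -> T)
    (inv : T -> T) (one : T) (S : nat -> finGroupType)
    (phi : T -> forall i, S i) :=
  [/\ forall x y i, phi (mul x y) i = (phi x i * phi y i)%g,
      forall f : (forall i, S i), exists x, forall i, phi x i = f i,
      forall x, (forall i, phi x i = 1%g) <-> center_set mul x &
      forall i (s : S i), open [set x | phi x i = s]].

Local Close Scope classical_set_scope.
Local Open Scope group_scope.

Definition nonabelian_simple (S : finGroupType) :=
  simple [set: S]%SET /\ ~~ abelian [set: S]%SET.

Definition perfect (E : finGroupType) := [~: [set: E]%SET, [set: E]%SET] = [set: E]%SET.

Definition central_extension (E S : finGroupType)
    (f : {morphism [set: E]%SET >-> S}) :=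
  f @* [set: E]%SET = [set: S]%SET /\ 'ker f \subset 'Z([set: E]%SET).

Definition universal_cover (Et S : finGroupType) :=
  perfect Et /\
  exists f : {morphism [set: Et]%SET >-> S},
    central_extension f /\
    forall (E : finGroupType) (g : {morphism [set: E]%SET >-> S}),
      central_extension g ->
      exists h : {morphism [set: Et]%SET >-> E},
        (forall x, g (h x) = f x) /\
        forall h' : {morphism [set: Et]%SET >-> E},
          (forall x, g (h' x) = f x) -> forall x, h' x = h x.

Definition Rn (n : nat) (H : finGroupType) : nat :=
  #|[set i : Iirr [set: H]%SET | ('chi_i 1%g <= n%:R)%R]|.

(* Phrased via initial segments so
   that an infinite set is correctly treated as unbounded. *)
Definition poly_bounded_count (P : nat -> nat -> bool) :=
  exists c d : nat, forall n, 0 < n ->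
    forall N, #|[set i : 'I_N | P n i]| <= c * n ^ d.

(* Main.v *)
Require Import Defs.
From mathcomp Require Import all_boot all_order all_algebra all_fingroup all_solvable all_field all_character.
From mathcomp Require Import all_classical all_reals topology.
Local Open Scope classical_set_scope.

From mathcomp Require Import zify.
Section Helpers.
Import Order.TTheory GRing.Theory Num.Theory.
Local Open Scope ring_scope.


Lemma irr1_ge1 (gT : finGroupType) (G : {group gT}) (i : Iirr G) : (1 : algC) <= 'chi_i 1%g.
Proof.
have := irr1_gt0 i; rewrite irr1_degree ltr0n => h.
by rewrite ler1n.
Qed.

Lemma Rn_gt1 n (H : finGroupType) :
  (1 < Rn n H)%N <-> exists i : Iirr [set: H]%G, i != 0 /\ 'chi_i 1%g <= n%:R.
Proof.
rewrite /Rn; split.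
  case/card_gt1P => x [y [xin yin xy]].
  move: xin yin; rewrite !inE => hx hy.
  have [x0|xn0] := eqVneq x 0.
    by exists y; split => //; rewrite eq_sym -x0.
  by exists x.
case=> i [i0 hi]; apply/card_gt1P; exists 0, i; rewrite !inE hi eq_sym i0; split=> //.
by rewrite irr0 cfun11 (le_trans (@irr1_ge1 _ _ i) hi).
Qed.

Lemma infl_Rn (E S : finGroupType) (f : {morphism [set: E]%G >-> S}) :
  (f @* [set: E]%SET)%g = [set: S]%SET -> forall n, (1 < Rn n S)%N -> (1 < Rn n E)%N.
Proof.
move=> fE n /Rn_gt1 [].
have eG : (f @* [set: E]%G)%G = [set: S]%G by apply/val_inj.
rewrite -eG => i [i0 hi]; apply/Rn_gt1.
have sGD : [set: E]%G \subset ('dom f)%g by rewrite subxx.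
exists (morph_Iirr i); rewrite morph_Iirr_eq0 // i0; split=> //.
by rewrite morph_IirrE // cfMorph1.
Qed.

Lemma desc_Rn (E S : finGroupType) (f : {morphism [set: E]%G >-> S}) :
  ('ker f \subset 'Z([set: E]%SET))%g -> (f @* [set: E]%SET)%g = [set: S]%SET -> perfect E ->
  forall n, (1 < Rn n E)%N -> (1 < Rn (n * n) S)%N.
Proof.
move=> kerZ fE perE n /Rn_gt1 [i [i0 hi]].
set G := [set: E]%G.
set chi := 'chi[G]_i.
set psi := chi * (chi^*)%CF.
have Npsi : psi \is a character by rewrite rpredM ?cfConjC_char ?irr_char.
have kerpsi : cfker psi = 'Z(chi)%CF.
  apply/setP=> x; have Gx : x \in G by rewrite inE.
  rewrite cfkerEchar // inE Gx /= irr_cfcenterE //.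
  rewrite !cfunE -!normCK (ger0_norm (char1_ge0 (irr_char i))).
  by rewrite eqrXn2 // char1_ge0 ?irr_char.
have [d hd] : exists d : nat, chi 1%g = d%:R := ex_intro _ _ (irr1_degree i).
have [j jc j0] : exists2 j, j \in irr_constt psi & j != 0.
  case: (pickP [pred j | (j \in irr_constt psi) && (j != 0)]) => [j /andP[jc j0] | h].
    by exists j.
  exfalso.
  have kG : cfker psi = G.
    apply/eqP; rewrite finset.eqEsubset cfker_sub /= cfkerE // finset.subsetI subxx /=.
    apply/bigcapsP => k kc; move/(_ k): h; rewrite /= kc /= => /negbFE/eqP ->.
    by rewrite cfker_irr0.
  have [b1 _] := irr1_bound i.
  rewrite -kerpsi kG indexgg -/chi hd -natrX ler_nat in b1.
  have n1 : d = 1%N.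
    have := irr1_gt0 i; rewrite -/chi hd ltr0n.
    move=> h0; rewrite -mulnn in b1; nia.
  have lin : chi \is a linear_char.
    by rewrite qualifE/= hd n1 eqxx andbT; apply: irr_char.
  have := lin_char_der1 lin; rewrite derg1 perE => sub.
  move/negP: i0; apply; rewrite -irr_eq1 -/chi; apply/eqP/cfun_inP => x Gx.
  by rewrite cfun1E Gx (cfker1 (fintype.subsetP sub x Gx)) -/chi (lin_char1 lin).
have deg : 'chi_j 1%g <= (n * n)%:R.
  apply: le_trans (char1_ge_constt Npsi jc) _.
  rewrite !cfunE /= -/chi hd conjC_nat -natrM ler_nat.
  move: hi; rewrite -/chi hd ler_nat => hdn.
  exact: leq_mul.
have kerj : ('ker f \subset cfker 'chi_j)%g.
  apply: (fintype.subset_trans kerZ).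
  apply: fintype.subset_trans (cfker_constt Npsi jc).
  rewrite kerpsi -(cap_cfcenter_irr G).
  exact: (finset.bigcap_inf i).
have nsK : ('ker f <| G)%g by apply: ker_normal.
have [g injg img] := first_isom f.
have isoG : isom (G / 'ker f)%g [set: S]%G g.
  by apply/isomP; split=> //; rewrite img.
set th := cfIsom isoG ('chi_j / 'ker f)%CF.
have thirr : th \in irr [set: S]%G.
  by rewrite cfIsom_irr cfQuo_irr ?mem_irr.
have [k thk] := irrP thirr.
apply/Rn_gt1; exists k; split.
  rewrite -irr_eq1 -thk cfIsom_eq1 cfQuo_eq1 // irr_eq1 //.
by rewrite -thk cfIsom1 cfQuo1.
Qed.
End Helpers.

Theorem corollary3p2
  (G : topologicalType) (mul : G -> G -> G) (inv : G -> G) (one : G)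
  (S St : nat -> finGroupType) (phi : G -> forall i, S i) :
  profinite_group mul inv one ->
  countably_based G ->
  infinite_set [set: G] ->
  (* quasi-semisimple: G = closure of [G,G], G/Z(G) = prod of nonabelian simple *)
  closure (derived_subgroup mul inv one) = [set: G] ->
  (forall i, nonabelian_simple (S i)) ->
  center_quotient_iso mul inv one phi ->
  (forall i, universal_cover (St i) (S i)) ->
  (poly_bounded_count (fun n i => 1 < Rn n (S i))
   <-> poly_bounded_count (fun n i => 1 < Rn n (St i)))%N.

Proof.
move=> _ _ _ _ _ _ hU.
have key1 : forall n i, (1 < Rn n (S i))%N -> (1 < Rn n (St i))%N.
  move=> n i; have [_ [f [[fE _] _]]] := hU i; exact: infl_Rn fE n.
have key2 : forall n i, (1 < Rn n (St i))%N -> (1 < Rn (n * n) (S i))%N.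
  move=> n i; have [per [f [[fE kZ] _]]] := hU i; exact: desc_Rn kZ fE per n.
split.
- case=> c [d H]; exists c, (d + d) => n n0 N.
  have nn : (0 < n * n)%N by rewrite muln_gt0 n0.
  rewrite expnD -expnMn; apply: leq_trans _ (H (n * n) nn N).
  apply: subset_leq_card; apply/fintype.subsetP => i; rewrite !inE; exact: key2.
- case=> c [d H]; exists c, d => n n0 N.
  apply: leq_trans _ (H n n0 N).
  apply: subset_leq_card; apply/fintype.subsetP => i; rewrite !inE; exact: key1.
Qed.
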